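(* The number of equilibria in $\Delta$ is finite.
   Context: Let $N\ge3$, $\alpha>1$, and $A_{i,j}=1-\delta_{i,j}$ for $i,j\le N$. Let $\Delta=\{v\in\mathbb R_+^N:\sum_iv_i=1,\ v_i\le3/4\ \forall i\}$. For $v\in\Delta$ let $v^\alpha=(v_i^\alpha)_i$, $H(v)=\sum_{i\neq j}v_i^\alpha v_j^\alpha$, $\pi_i(v)=v_i^\alpha(Av^\alpha)_i/H(v)$, and $F(v)=-v+\pi(v)$. An equilibrium is $v\in\Delta$ with $F(v)=0$. *)

(* Defs.v *)
From HB Require Import structures.
From mathcomp Require Import all_boot all_order all_algebra.
From mathcomp Require Import all_classical all_reals all_analysis.
Set Implicit Arguments. Unset Strict Implicit. Unset Printing Implicit Defensive.
Import Order.TTheory GRing.Theory Num.Theory.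
Local Open Scope ring_scope.

Section Defs.
Variables (R : realType) (N : nat) (alpha : R).

Definition in_Delta (v : 'I_N -> R) : Prop :=
  (forall i, 0 <= v i) /\ \sum_(i < N) v i = 1 /\ (forall i, v i <= 3 / 4).

Definition Amat (i j : 'I_N) : R := 1 - (i == j)%:R.

Definition vpow (v : 'I_N -> R) (i : 'I_N) : R := v i `^ alpha.

Definition Hf (v : 'I_N -> R) : R :=
  \sum_(i < N) \sum_(j < N | i != j) vpow v i * vpow v j.

Definition pif (v : 'I_N -> R) (i : 'I_N) : R :=
  vpow v i * (\sum_(j < N) Amat i j * vpow v j) / Hf v.

Definition Ff (v : 'I_N -> R) (i : 'I_N) : R := - v i + pif v i.

Definition equilibrium (v : 'I_N -> R) : Prop :=
  in_Delta v /\ (forall i, Ff v i = 0).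
End Defs.

(* Main.v *)
Require Import Defs.
From HB Require Import structures.
From mathcomp Require Import all_boot all_order all_algebra.
From mathcomp Require Import all_classical all_reals all_analysis.
From mathcomp Require Import ring lra.
From mathcomp Require Import finmap.
Set Implicit Arguments. Unset Strict Implicit. Unset Printing Implicit Defensive.
Import Order.TTheory GRing.Theory Num.Theory.
Local Open Scope classical_set_scope.
Local Open Scope ring_scope.

Section Exps.
Variable R : realType.

Lemma is_derive_cexp (c l t : R) :
  is_derive t 1 (fun u => c * expR (l * u)) (c * l * expR (l * t)).
Proof.
have h1 : is_derive t 1 (fun u : R => l * u) l.
  have := @is_deriveZ R R R id l t 1 1 (is_derive_id _ _).
  by rewrite /GRing.scale /= mulr1.
have h2 : is_derive t 1 (expR \o (fun u : R => l * u)) (expR (l * t) * l).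
  by apply: is_derive1_comp.
have := @is_deriveZ R R R _ c t 1 _ h2.
rewrite /GRing.scale /= => H.
have -> : (fun u => c * expR (l * u)) = c \*: (expR \o ( *%R l)) by apply/funext.
by apply: is_derive_eq H _; ring.
Qed.

Definition expsum (s : seq (R * R)) (t : R) := \sum_(p <- s) p.1 * expR (p.2 * t).
Definition dlist (s : seq (R * R)) := [seq (p.1 * p.2, p.2) | p <- s].

Lemma is_derive_expsum (s : seq (R * R)) (t : R) : is_derive t 1 (expsum s) (expsum (dlist s) t).
Proof.
elim: s => [|p s IH].
  have -> : expsum [::] = cst 0 by apply/funext => u; rewrite /expsum big_nil.
  exact: is_derive_cst.
have -> : expsum (p :: s) = (fun u => p.1 * expR (p.2 * u)) + expsum s.
  by apply/funext => u; rewrite /expsum big_cons.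
rewrite /expsum /dlist /= big_cons /=.
by apply: is_deriveD => //; apply: is_derive_cexp.
Qed.

End Exps.
Section Z.
Variable R : realType.

Definition zbound (f : R -> R) (n : nat) := forall s : seq R,
  sorted <%R s -> all (fun x => f x == 0) s -> (size s <= n)%N.

Lemma rolle_list (f df : R -> R) : (forall t : R, is_derive t 1 f (df t)) ->
  forall s x, path <%R x s -> all (fun y => f y == 0) (x :: s) ->
  exists s', [/\ size s' = size s, sorted <%R s', all (fun y => df y == 0) s'
     & all (fun c => x < c) s'].
Proof.
move=> Hd; elim=> [|y s IH] x; first by exists [::].
move=> /= /andP[xy py] /and3P[/eqP fx /eqP fy fs].
have [t' [st' srt' zt' gt']] : exists s', [/\ size s' = size s, sorted <%R s', all (fun y => df y == 0) s' & all (fun c => y < c) s'].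
  by apply: IH py _; rewrite /= fy eqxx fs.
have /(Rolle xy)[z _||c cxy dc] : f x = f y by rewrite fx fy.
- by case: (Hd z).
- by apply: derivable_within_continuous => r _; case: (Hd r).
move: cxy; rewrite in_itv /= => /andP[xc cy].
have dfc : df c = 0.
  by case: (Hd c) => _ <-; case: dc.
exists (c :: t'); split => //=; first by rewrite st'.
- rewrite (path_sortedE lt_trans) srt' andbT.
  by apply: sub_all gt' => z /= /(lt_trans cy).
- by rewrite dfc eqxx.
- rewrite xc /=; apply: sub_all gt' => z /= /(lt_trans (lt_trans xc cy)).
  by [].
Qed.

Lemma zbound_rolle (f df : R -> R) n : (forall t : R, is_derive t 1 f (df t)) ->
  zbound df n -> zbound f n.+1.
Proof.
move=> Hd zb [|x s] //= srt zs.
have [s' [e ss zs' _]] := rolle_list Hd srt zs.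
by rewrite ltnS -e; apply: zb.
Qed.

Lemma zbound_mono (f g : R -> R) n m : (forall t, f t = 0 -> g t = 0) ->
  (n <= m)%N -> zbound g n -> zbound f m.
Proof.
move=> fg nm zb s ss zs; apply: leq_trans nm; apply: zb ss _.
by apply: sub_all zs => t /eqP /fg ->.
Qed.

End Z.

Section M.
Variable R : realType.

Lemma expsum_shift (c0 l0 : R) (l : seq (R * R)) t :
  expsum ((c0, 0) :: [seq (p.1, p.2 - l0) | p <- l]) t =
  expR (- (l0 * t)) * expsum ((c0, l0) :: l) t.
Proof.
rewrite /expsum !big_cons big_map /= mulrDr mulr_sumr; congr (_ + _).
  by rewrite mul0r expR0 mulr1 mulrCA -expRD addNr expR0 mulr1.
apply: eq_bigr => p _; rewrite mulrCA -expRD; congr (_ * expR _); ring.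
Qed.

Lemma expsum_zb n (l : seq (R * R)) : size l = n.+1 ->
  all (fun p => p.1 != 0) l -> uniq (map snd l) -> zbound (expsum l) n.
Proof.
elim: n l => [|n IH] [|[c0 l0] l] //=.
  case: l => // _ /andP[c0n _] _ [|x s] // _ /andP[/eqP h _].
  move: h; rewrite /expsum big_cons big_nil addr0 /=.
  by move/eqP; rewrite mulf_eq0 (negbTE c0n) /= gt_eqF // expR_gt0.
move=> [sl] /andP[c0n an] /andP[l0n ul].
pose l1 := [seq (p.1, p.2 - l0) | p <- l].
have zd : zbound (expsum (dlist l1)) n.
  apply: IH.
  - by rewrite /dlist !size_map.
  - rewrite /dlist /l1 -map_comp all_map; apply/allP => p pl /=.
    rewrite mulf_eq0 negb_or (allP an p pl) /= subr_eq0.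
    by apply: contraNneq l0n => <-; apply: map_f.
  - rewrite /dlist /l1 -!map_comp.
    have -> : [seq (snd \o ((fun p : R * R => (p.1 * p.2, p.2)) \o (fun p => (p.1, p.2 - l0)))) i | i <- l]
       = [seq x - l0 | x <- map snd l] by rewrite -map_comp.
    by rewrite map_inj_uniq // => x y /addIr.
have zd' : zbound (expsum (dlist ((c0, 0) :: l1))) n.
  apply: zbound_mono zd => // t.
  by rewrite /expsum /dlist /= big_cons /= mulr0 mul0r add0r.
have zg := zbound_rolle (fun t => is_derive_expsum ((c0, 0) :: l1) t) zd'.
apply: zbound_mono zg => // t ft.
by rewrite /l1 expsum_shift ft mulr0.
Qed.

End M.

Section N.
Variable R : realType.

Lemma expsum_filter (l : seq (R * R)) t :
  expsum [seq p <- l | p.1 != 0%R] t = expsum l t.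
Proof.
rewrite /expsum big_filter big_mkcond; apply: eq_bigr => p _.
by case: ifP => // /negbFE /eqP ->; rewrite mul0r.
Qed.

Lemma expsum_zb' (l : seq (R * R)) : uniq (map snd l) ->
  has (fun p => p.1 != 0) l -> zbound (expsum l) (size l).-1.
Proof.
move=> ul hl.
have hf := hl; rewrite has_filter in hf.
have sz : (size [seq p <- l | p.1 != 0%R] <= size l)%N.
  by rewrite size_filter count_size.
have uf : uniq (map snd [seq p <- l | p.1 != 0%R]).
  apply: subseq_uniq ul; apply: map_subseq; exact: filter_subseq.
have af : all (fun p => p.1 != 0) [seq p <- l | p.1 != 0%R] by apply: filter_all.
move: hf sz uf af; case: [seq p <- l | p.1 != 0%R] (expsum_filter l) => // p l' ef _ sz uf af.
have := expsum_zb (erefl (size (p :: l'))) af uf.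
apply: zbound_mono => [t|]; first by rewrite -ef.
by rewrite -ltnS prednK // (leq_trans _ sz).
Qed.

Lemma zbound_uniq (f : R -> R) n : zbound f n -> forall s : seq R, uniq s ->
  all (fun x => f x == 0) s -> (size s <= n)%N.
Proof.
move=> zb s us zs; rewrite -(size_sort <=%R s); apply: zb.
  by rewrite Order.POrderTheory.lt_sorted_uniq_le sort_uniq us sort_sorted //; exact: le_total.
by rewrite all_sort.
Qed.

Lemma zbound_finite (f : R -> R) n : zbound f n -> finite_set [set t | f t = 0].
Proof.
move=> zb; apply: contrapT => inf.
have [B BA cB] := infinite_set_fset n.+1 inf.
have := zbound_uniq zb (fset_uniq B).
have -> : all (fun x => f x == 0) B.
  by apply/allP => x xB; apply/eqP; exact: BA.
move=> /(_ isT); rewrite leqNgt.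
by move: cB; rewrite /= => ->.
Qed.

End N.


Section Main.
Variables (R : realType) (N : nat) (alpha : R).
Hypothesis ha : 1 < alpha.

Lemma sum_b_le (b : 'I_N -> bool) : (\sum_(l < N) (b l : nat) <= N)%N.
Proof.
rewrite -[X in (_ <= X)%N]card_ord -sum1_card.
by apply: leq_sum => l _; exact: leq_b1.
Qed.

Lemma Amat_sum (x : 'I_N -> R) i :
  \sum_(j < N) Amat R i j * x j = \sum_(j < N) x j - x i.
Proof.
rewrite /Amat; under eq_bigr do rewrite mulrBl mul1r.
rewrite sumrB; congr (_ - _); rewrite (bigD1 i) //= eqxx mul1r big1 ?addr0 // => j ji.
by rewrite eq_sym (negbTE ji) mul0r.
Qed.

Definition Sx (v : 'I_N -> R) := \sum_(j < N) vpow alpha v j.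

Definition lK (v : 'I_N -> R) : seq (R * R) :=
  [:: (Sx v, alpha - 1); (-1, 2 * alpha - 1); (- Hf alpha v, 0)].

Lemma coord_eq (v : 'I_N -> R) i : equilibrium alpha v -> 0 < v i ->
  expsum (lK v) (ln (v i)) = 0.
Proof.
move=> [_ hF] vi0; have := hF i; rewrite /Ff /pif Amat_sum.
set H := Hf alpha v; set x := vpow alpha v i.
move=> /eqP; rewrite addrC subr_eq0 => /eqP e.
have Hn : H != 0.
  apply/negP => /eqP H0; move: e; rewrite H0 invr0 mulr0 => e.
  by move: vi0; rewrite -e ltxx.
have e2 : v i * H = x * (Sx v - x) by rewrite -e /Sx divfK.
have xe : x = expR (alpha * ln (v i)) by rewrite /x /vpow /powR (gt_eqF vi0).
have ve : v i = expR (ln (v i)) by rewrite lnK // posrE.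
set u := ln (v i); rewrite -/u in xe ve.
have hu : expR u != 0 by rewrite gt_eqF // expR_gt0.
apply/eqP; rewrite -(mulrI_eq0 _ (lregP hu)).
rewrite /expsum /lK !big_cons big_nil /= addr0 mul0r expR0 mulr1.
have E1 : expR u * expR ((alpha - 1) * u) = x.
  by rewrite -expRD xe; congr expR; ring.
have E2 : expR u * expR ((2 * alpha - 1) * u) = x * x.
  by rewrite -expRD xe -expRD; congr expR; ring.
apply/eqP; transitivity (Sx v * x - x * x - v i * H).
  by rewrite -E2 -E1 ve /H; ring.
by rewrite e2; ring.
Qed.


Lemma lnI (a b : R) : 0 < a -> 0 < b -> ln a = ln b -> a = b.
Proof. by move=> a0 b0 e; rewrite -(lnK a0) -(lnK b0) e. Qed.

Lemma lnI_neq (a b : R) : 0 < a -> 0 < b -> a != b -> ln a != ln b.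
Proof. by move=> a0 b0; apply: contra_neq; apply: lnI. Qed.

Lemma three_vals (v : 'I_N -> R) i j l : equilibrium alpha v ->
  0 < v i -> 0 < v j -> 0 < v l -> v i != v j -> v i != v l -> v j != v l -> False.
Proof.
move=> eqv hi hj hl ij il jl.
have zb : zbound (expsum (lK v)) (size (lK v)).-1.
  apply: expsum_zb'; last by rewrite /= oppr_eq0 oner_eq0 orbT.
  rewrite /= !inE !negb_or; repeat (apply/andP; split); try done;
    apply/eqP => H; have ha1 := ha; clear -ha1 H; lra.
have := zbound_uniq zb (s := [:: ln (v i); ln (v j); ln (v l)]).
rewrite /= !inE !negb_or !lnI_neq //= !coord_eq //= eqxx.
by move=> /(_ isT isT).
Qed.

Lemma sum_two (phi : R -> R) (v : 'I_N -> R) c d : phi 0 = 0 -> c != 0 ->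
  d != 0 -> c != d -> (forall l, v l = 0 \/ v l = c \/ v l = d) ->
  \sum_(l < N) phi (v l) = (\sum_(l < N) (v l == c : nat))%:R * phi c +
                           (\sum_(l < N) (v l == d : nat))%:R * phi d.
Proof.
move=> p0 c0 d0 cd hv; rewrite !natr_sum !mulr_suml -big_split.
apply: eq_bigr => l _ /=.
have c0' : (0 == c) = false by rewrite eq_sym (negbTE c0).
have d0' : (0 == d) = false by rewrite eq_sym (negbTE d0).
have dc : (d == c) = false by rewrite eq_sym (negbTE cd).
case: (hv l) => [->|[->|->]];
  by rewrite ?c0' ?d0' ?dc ?(negbTE cd) ?eqxx /= ?mul0r ?mul1r ?addr0 ?add0r.
Qed.

Lemma sum_one (phi : R -> R) (v : 'I_N -> R) c : phi 0 = 0 -> c != 0 ->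
  (forall l, v l = 0 \/ v l = c) ->
  \sum_(l < N) phi (v l) = (\sum_(l < N) (v l == c : nat))%:R * phi c.
Proof.
move=> p0 c0 hv; rewrite !natr_sum !mulr_suml.
apply: eq_bigr => l _ /=.
have c0' : (0 == c) = false by rewrite eq_sym (negbTE c0).
by case: (hv l) => ->; rewrite ?c0' ?eqxx /= ?mul0r ?mul1r.
Qed.

Definition phil (k m : nat) : seq (R * R) :=
  [:: (k%:R - 1, 2 * alpha - 1); (- k%:R, alpha); (m%:R, alpha - 1); (1 - m%:R, 0)].
Definition Zs k m := [set t | expsum (phil k m) t = 0].
Definition lo (k m : nat) (t : R) := expR t / (k%:R * expR t + m%:R).
Definition Fset := [set (0 : R)] `|`
  \bigcup_(k in `I_N.+1) \bigcup_(m in `I_N.+1) (lo k m @` Zs k m).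

Lemma Fset_finite : finite_set Fset.
Proof.
rewrite finite_setU; split; first exact: finite_set1.
apply: bigcup_finite => // k _; apply: bigcup_finite => // m _.
apply: finite_image; apply: (@zbound_finite _ _ (size (phil k m)).-1).
apply: expsum_zb'.
  rewrite /= !inE !negb_or; repeat (apply/andP; split); try done;
    apply/eqP => H; have ha1 := ha; clear -ha1 H; lra.
case: k => [|k] /=.
  by rewrite sub0r oppr_eq0 oner_eq0.
by rewrite oppr_eq0 pnatr_eq0 orbT.
Qed.


Lemma ex2 (y : R) : expR ((2 * alpha - 1) * y) = expR (alpha * y) * expR ((alpha - 1) * y).
Proof. by rewrite -expRD; congr expR; ring. Qed.

Lemma powRE (c : R) : 0 < c -> c `^ alpha = expR (alpha * ln c).
Proof. by move=> c0; rewrite /powR (gt_eqF c0). Qed.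

Lemma coordP (v : 'I_N -> R) i : equilibrium alpha v -> 0 < v i ->
  Sx v * expR ((alpha - 1) * ln (v i)) - expR ((2 * alpha - 1) * ln (v i)) = Hf alpha v.
Proof.
move=> eqv vi0; have := coord_eq eqv vi0.
rewrite /expsum /lK !big_cons big_nil /= mul0r expR0 mulr1 addr0 => hu.
by apply/eqP; rewrite -subr_eq0; apply/eqP; rewrite -hu; ring.
Qed.

Lemma eq_vals (v : 'I_N -> R) i : equilibrium alpha v -> Fset (v i).
Proof.
move=> eqv; have [vge0 [sum1 _]] := eqv.1.
have [vi0|ci0] := eqVneq (v i) 0; first by left.
have {ci0} ci0 : 0 < v i by rewrite lt_def ci0 vge0.
right; set c := v i.
have [[j [dj0 djc]]|none] := pselect (exists j, 0 < v j /\ v j != c); last first.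
  have hv : forall l, v l = 0 \/ v l = c.
    move=> l; have [->|l0] := eqVneq (v l) 0; first by left.
    right; apply/eqP; apply: contraT => nc; exfalso; apply: none; exists l.
    by rewrite lt_def l0 vge0.
  have := @sum_one id v c (erefl (0 : R)) (negbT (gt_eqF ci0)) hv.
  rewrite sum1 /=; set m := (\sum_(l < N) _)%N => e.
  have mn : m%:R != 0 :> R by apply: contra_eq_neq e => ->; rewrite mul0r oner_neq0.
  exists 0%N; first by [].
  exists m; first by rewrite /= ltnS sum_b_le.
  exists 0.
    rewrite /Zs /expsum /phil /= !big_cons big_nil !mulr0 expR0 !mulr1 /=.
    ring.
  rewrite /lo expR0 mul0r add0r.
  by apply: (mulfI mn); rewrite mulrCA divff // mulr1 -e.
set d := v j.
have hv : forall l, v l = 0 \/ v l = c \/ v l = d.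
  move=> l; have [->|l0] := eqVneq (v l) 0; first by left.
  have l0' : 0 < v l by rewrite lt_def l0 vge0.
  have [->|lc] := eqVneq (v l) c; first by right; left.
  have [->|ld] := eqVneq (v l) d; first by right; right.
  exfalso; apply: (@three_vals v i j l eqv ci0 dj0 l0') => //.
  - by rewrite eq_sym.
  - by rewrite eq_sym.
  - by rewrite eq_sym.
have cd : c != d by rewrite eq_sym.
have hs := @sum_two id v c d (erefl (0 : R)) (negbT (gt_eqF ci0)) (negbT (gt_eqF dj0)) cd hv.
have hS := @sum_two (fun y => y `^ alpha) v c d (powR0 (negbT (gt_eqF (lt_trans ltr01 ha))))
  (negbT (gt_eqF ci0)) (negbT (gt_eqF dj0)) cd hv.
rewrite sum1 /= in hs.
set k := (\sum_(l < N) (v l == c : nat))%N in hs hS.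
set m := (\sum_(l < N) (v l == d : nat))%N in hs hS.
have hPu := coordP eqv ci0; have hPw := coordP eqv dj0.
rewrite -/c in hPu; rewrite -/d in hPw.
have Se : Sx v = k%:R * expR (alpha * ln c) + m%:R * expR (alpha * ln d).
  by rewrite /Sx /vpow hS !powRE.
have ce : c = expR (ln c) by rewrite lnK // posrE.
have de : d = expR (ln d) by rewrite lnK // posrE.
set u := ln c in hPu Se ce; set w := ln d in hPw Se de.
exists k; first by rewrite /= ltnS sum_b_le.
exists m; first by rewrite /= ltnS sum_b_le.
exists (u - w).
  have ut : u = (u - w) + w by ring.
  set t := u - w; rewrite ut in hPu Se ce.
  rewrite /Zs /expsum /phil /= !big_cons big_nil mul0r expR0 /=.
  have B0 : expR ((2 * alpha - 1) * w) != 0 by rewrite gt_eqF // expR_gt0.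
  apply: (mulfI B0); rewrite mulr0.
  transitivity (Sx v * expR ((alpha - 1) * (t + w)) - expR ((2 * alpha - 1) * (t + w))
     - (Sx v * expR ((alpha - 1) * w) - expR ((2 * alpha - 1) * w))); last first.
    by rewrite hPu hPw subrr.
  rewrite Se !mulrDr !expRD !ex2; ring.
rewrite /lo.
have et : expR (u - w) * d = c by rewrite ce de -expRD subrK.
set D := k%:R * expR (u - w) + m%:R.
have dD : d * D = 1 by rewrite hs /D -et; ring.
have Dn : D != 0 by apply: contra_eq_neq dD => ->; rewrite mulr0 eq_sym oner_neq0.
rewrite -et; congr (_ * _); by rewrite -[LHS]mul1r -dD mulfK.
Qed.

End Main.

Lemma fin_funs (R : realType) (N : nat) (F : set R) : finite_set F ->
  finite_set [set v : 'I_N -> R | forall i, F (v i)].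
Proof.
move=> /finite_fsetP [X ->].
apply: (@sub_finite_set _ _ ((fun f : {ffun 'I_N -> X} => fun i => val (f i)) @` setT));
  last exact: finite_image.
move=> v /= hv; exists [ffun i => [` (hv i : v i \in X)]%fset] => //.
by apply/funext => i; rewrite ffunE.
Qed.

Local Open Scope ring_scope.
Local Open Scope classical_set_scope.

Theorem lemma4p6 (R : realType) (N : nat) (alpha : R) :
  (3 <= N)%N -> 1 < alpha ->
  finite_set [set v : 'I_N -> R | @equilibrium R N alpha v].
Proof.
move=> _ ha; apply: (sub_finite_set _ (fin_funs N (Fset_finite N ha))).
move=> v ev i; apply: (eq_vals ha i); exact: ev.
Qed.
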